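(* Let $\Omega_{\mathbf H}$ denote the restriction of the 3-form $\Omega(z_1,z_2,z_3)=\langle z_1\times z_2,z_3\rangle$ to the tangent bundle of $\mathbf H^{4,2}$, regarded as a complex-valued 3-form on the almost complex manifold $(\mathbf H^{4,2},\mathbf J)$ and decomposed by type as $\Omega_{\mathbf H}=\theta+\zeta+\bar\zeta+\bar\theta$ with $\theta$ of type $(3,0)$ and $\zeta$ of type $(2,1)$. Then $\theta$ is nowhere vanishing and $\zeta$ is identically zero. In particular $\theta$ trivializes the canonical bundle of $(\mathbf H^{4,2},\mathbf J)$.
   Context: Split octonions: $\mathbb H'$ has basis $1,j,\delta,\epsilon$ with $j^2=-1$, $\delta^2=\epsilon^2=1$, $j\delta=-\delta j=\epsilon$; $\mathbb O'=\mathbb H'\oplus\mathbb H'$ with $(x_1,y_1)\cdot(x_2,y_2)=(x_1x_2-\bar y_2y_1,\ y_2x_1+y_1\bar x_2)$, conjugation $(x,y)\mapsto(\bar x,-y)$, and $\mathrm{Im}(\mathbb O')$ the $(-1)$-eigenspace. For $z_1,z_2\in\mathrm{Im}(\mathbb O')$: $\langle z_1,z_2\rangle=\tfrac12(z_1z_2+\overline{z_1z_2})$, $z_1\times z_2=\tfrac12(z_1z_2-\overline{z_1z_2})$, $\mathbf q(z)=\langle z,z\rangle$ (signature $(4,3)$). $\mathbf H^{4,2}=\{z:\mathbf q(z)=-1\}$, $T_z\mathbf H^{4,2}=z^\perp$, and $\mathbf J_z(w)=z\times w$ is an almost complex structure on $\mathbf H^{4,2}$. *)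

(* Defs.v *)
From HB Require Import structures.
From mathcomp Require Import all_boot all_order all_algebra.
From mathcomp Require Import complex.
From mathcomp Require Import reals.
Set Implicit Arguments. Unset Strict Implicit. Unset Printing Implicit Defensive.
Import Order.TTheory GRing.Theory Num.Theory.
Local Open Scope ring_scope.

Section SplitOctonions.
Variable R : realType.

(* Split quaternions H' : a + b j + c delta + d eps *)
Record splitquat := SQ { sq1 : R; sqj : R; sqd : R; sqe : R }.

(* multiplication table: j^2=-1, d^2=e^2=1, jd=-dj=e,
   hence je=-d, ej=d, de=-j, ed=j *)
Definition sq_mul (x y : splitquat) : splitquat :=
  let: SQ a1 b1 c1 d1 := x in let: SQ a2 b2 c2 d2 := y in
  SQ (a1*a2 - b1*b2 + c1*c2 + d1*d2)
     (a1*b2 + b1*a2 - c1*d2 + d1*c2)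
     (a1*c2 + c1*a2 - b1*d2 + d1*b2)
     (a1*d2 + d1*a2 + b1*c2 - c1*b2).
Definition sq_add (x y : splitquat) : splitquat :=
  SQ (sq1 x + sq1 y) (sqj x + sqj y) (sqd x + sqd y) (sqe x + sqe y).
Definition sq_opp (x : splitquat) : splitquat :=
  SQ (- sq1 x) (- sqj x) (- sqd x) (- sqe x).
Definition sq_scale (r : R) (x : splitquat) : splitquat :=
  SQ (r * sq1 x) (r * sqj x) (r * sqd x) (r * sqe x).
Definition sq_conj (x : splitquat) : splitquat :=
  SQ (sq1 x) (- sqj x) (- sqd x) (- sqe x).
Definition sq_zero : splitquat := SQ 0 0 0 0.

Definition splitoct := (splitquat * splitquat)%type.

Definition so_mul (z1 z2 : splitoct) : splitoct :=
  let: (x1, y1) := z1 in let: (x2, y2) := z2 in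
  (sq_add (sq_mul x1 x2) (sq_opp (sq_mul (sq_conj y2) y1)),
   sq_add (sq_mul y2 x1) (sq_mul y1 (sq_conj x2))).
Definition so_add (z1 z2 : splitoct) : splitoct :=
  (sq_add z1.1 z2.1, sq_add z1.2 z2.2).
Definition so_opp (z : splitoct) : splitoct := (sq_opp z.1, sq_opp z.2).
Definition so_scale (r : R) (z : splitoct) : splitoct :=
  (sq_scale r z.1, sq_scale r z.2).
Definition so_conj (z : splitoct) : splitoct := (sq_conj z.1, sq_opp z.2).
Definition so_one : splitoct := (SQ 1 0 0 0, sq_zero).

Definition so_Im (z : splitoct) : Prop := so_conj z = so_opp z.

(* <z1,z2> = 1/2 (z1 z2 + conj(z1 z2)), an element of R.1 ; we record the
   real scalar s with <z1,z2> = s . 1 (its 1-coordinate). *)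
Definition so_inner_oct (z1 z2 : splitoct) : splitoct :=
  so_scale (2^-1) (so_add (so_mul z1 z2) (so_conj (so_mul z1 z2))).
Definition so_inner (z1 z2 : splitoct) : R := sq1 (so_inner_oct z1 z2).1.

Definition so_cross (z1 z2 : splitoct) : splitoct :=
  so_scale (2^-1) (so_add (so_mul z1 z2) (so_opp (so_conj (so_mul z1 z2)))).

Definition so_q (z : splitoct) : R := so_inner z z.

Definition Omega (z1 z2 z3 : splitoct) : R := so_inner (so_cross z1 z2) z3.

Definition H42 (z : splitoct) : Prop := so_Im z /\ so_q z = -1.

Definition tangentH (z w : splitoct) : Prop := so_Im w /\ so_inner z w = 0.

Definition Jz (z w : splitoct) : splitoct := so_cross z w.

(* Complexified tangent vectors u + i v are represented by pairs (u, v).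
   cext f is the C-trilinear extension of a real trilinear form f. *)
Definition cext (f : splitoct -> splitoct -> splitoct -> R)
  (X Y Z : splitoct * splitoct) : R[i] :=
  let: (a1, b1) := X in let: (a2, b2) := Y in let: (a3, b3) := Z in
  Complex (f a1 a2 a3 - f b1 b2 a3 - f b1 a2 b3 - f a1 b2 b3)
          (f b1 a2 a3 + f a1 b2 a3 + f a1 a2 b3 - f b1 b2 b3).

(* projections of a real tangent vector X onto T^{1,0} = {Jv = i v} and
   T^{0,1} = {Jv = - i v}:  pi10 X = (X - i J X)/2, pi01 X = (X + i J X)/2 *)
Definition pi10 (z X : splitoct) : splitoct * splitoct :=
  (so_scale (2^-1) X, so_scale (- 2^-1) (Jz z X)).
Definition pi01 (z X : splitoct) : splitoct * splitoct :=
  (so_scale (2^-1) X, so_scale (2^-1) (Jz z X)).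

Definition thetaH (z X Y Z : splitoct) : R[i] :=
  cext Omega (pi10 z X) (pi10 z Y) (pi10 z Z).
Definition zetaH (z X Y Z : splitoct) : R[i] :=
  cext Omega (pi10 z X) (pi10 z Y) (pi01 z Z)
  + cext Omega (pi10 z X) (pi01 z Y) (pi10 z Z)
  + cext Omega (pi01 z X) (pi10 z Y) (pi10 z Z).

End SplitOctonions.

(* Main.v *)
Require Import Defs.
From HB Require Import structures.
From mathcomp Require Import all_boot all_order all_algebra.
From mathcomp Require Import complex.
From mathcomp Require Import reals.
From mathcomp Require Import ring lra.
Import GRing.Theory Num.Theory.
Set Implicit Arguments. Unset Strict Implicit.
Local Open Scope ring_scope.
Section S.
Variable R : realType.
Lemma sq_mulE (a1 b1 c1 d1 a2 b2 c2 d2 : R) : sq_mul (SQ a1 b1 c1 d1) (SQ a2 b2 c2 d2) =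
  SQ (a1*a2 - b1*b2 + c1*c2 + d1*d2)
     (a1*b2 + b1*a2 - c1*d2 + d1*c2)
     (a1*c2 + c1*a2 - b1*d2 + d1*b2)
     (a1*d2 + d1*a2 + b1*c2 - c1*b2).
Proof. by []. Qed.
Lemma sq_addE (a1 b1 c1 d1 a2 b2 c2 d2 : R) : sq_add (SQ a1 b1 c1 d1) (SQ a2 b2 c2 d2) =
  SQ (a1+a2) (b1+b2) (c1+c2) (d1+d2).
Proof. by []. Qed.
Lemma sq_oppE (a1 b1 c1 d1 : R) : sq_opp (SQ a1 b1 c1 d1) = SQ (-a1) (-b1) (-c1) (-d1).
Proof. by []. Qed.
Lemma sq_conjE (a1 b1 c1 d1 : R) : sq_conj (SQ a1 b1 c1 d1) = SQ a1 (-b1) (-c1) (-d1).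
Proof. by []. Qed.
Lemma sq_scaleE (r a1 b1 c1 d1 : R) : sq_scale r (SQ a1 b1 c1 d1) = SQ (r*a1) (r*b1) (r*c1) (r*d1).
Proof. by []. Qed.
Lemma so_mulE (x1 y1 x2 y2 : splitquat R) : so_mul (x1, y1) (x2, y2) =
  (sq_add (sq_mul x1 x2) (sq_opp (sq_mul (sq_conj y2) y1)),
   sq_add (sq_mul y2 x1) (sq_mul y1 (sq_conj x2))).
Proof. by []. Qed.
Lemma so_addE (x1 y1 x2 y2 : splitquat R) : so_add (x1, y1) (x2, y2) = (sq_add x1 x2, sq_add y1 y2).
Proof. by []. Qed.
Lemma so_oppE (x y : splitquat R) : so_opp (x, y) = (sq_opp x, sq_opp y).
Proof. by []. Qed.
Lemma so_scaleE (r : R) (x y : splitquat R) : so_scale r (x, y) = (sq_scale r x, sq_scale r y).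
Proof. by []. Qed.
Lemma so_conjE (x y : splitquat R) : so_conj (x, y) = (sq_conj x, sq_opp y).
Proof. by []. Qed.
Lemma so_crossE (a b : splitoct R) : so_cross a b =
  so_scale (2^-1) (so_add (so_mul a b) (so_opp (so_conj (so_mul a b)))).
Proof. by []. Qed.
Lemma so_innerE (a b : splitoct R) : so_inner a b =
  sq1 (so_scale (2^-1) (so_add (so_mul a b) (so_conj (so_mul a b)))).1.
Proof. by []. Qed.
Definition mkI (a1 a2 a3 a4 a5 a6 a7 : R) : splitoct R := (SQ 0 a1 a2 a3, SQ a4 a5 a6 a7).
Definition baseE := (sq_mulE, sq_addE, sq_oppE, sq_conjE, sq_scaleE, so_mulE, so_addE, so_oppE, so_scaleE, so_conjE).
Lemma crossI (a1 a2 a3 a4 a5 a6 a7 b1 b2 b3 b4 b5 b6 b7 : R) :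
  so_cross (mkI a1 a2 a3 a4 a5 a6 a7) (mkI b1 b2 b3 b4 b5 b6 b7) =
  mkI (-a7*b6 + a6*b7 - a5*b4 + a4*b5 + a3*b2 - a2*b3)
(-a7*b5 - a6*b4 + a5*b7 + a4*b6 + a3*b1 - a1*b3)
(-a7*b4 + a6*b5 - a5*b6 + a4*b7 - a2*b1 + a1*b2)
(-a7*b3 - a6*b2 + a5*b1 + a3*b7 + a2*b6 - a1*b5)
(-a7*b2 + a6*b3 - a4*b1 - a3*b6 + a2*b7 + a1*b4)
(-a7*b1 + a5*b3 - a4*b2 - a3*b5 + a2*b4 + a1*b7)
(a6*b1 - a5*b2 - a4*b3 + a3*b4 + a2*b5 - a1*b6).
Proof.
rewrite so_crossE /mkI !baseE.
(congr (SQ _ _ _ _, SQ _ _ _ _); (field; try done)).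
Qed.
Lemma innerI (a1 a2 a3 a4 a5 a6 a7 b1 b2 b3 b4 b5 b6 b7 : R) :
  so_inner (mkI a1 a2 a3 a4 a5 a6 a7) (mkI b1 b2 b3 b4 b5 b6 b7) =
  a7*b7 + a6*b6 - a5*b5 - a4*b4 + a3*b3 + a2*b2 - a1*b1.
Proof.
rewrite so_innerE /mkI !baseE /=.
(field; try done).
Qed.
Lemma OmegaE (a b c : splitoct R) : Omega a b c = so_inner (so_cross a b) c.
Proof. by []. Qed.
Lemma JzE (a b : splitoct R) : Jz a b = so_cross a b.
Proof. by []. Qed.
Lemma so_qE (a : splitoct R) : so_q a = so_inner a a.
Proof. by []. Qed.
Lemma imE (z : splitoct R) : so_Im z -> sq1 z.1 = 0.
Proof.
case: z => [[a b c d] y]; rewrite /so_Im so_conjE so_oppE sq_conjE sq_oppE.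
case=> /eqP; rewrite -addr_eq0 -mulr2n mulrn_eq0 /= => /eqP //.
Qed.
Lemma mkI_Im (a1 a2 a3 a4 a5 a6 a7 : R) : so_Im (mkI a1 a2 a3 a4 a5 a6 a7).
Proof. by rewrite /so_Im /mkI so_conjE so_oppE sq_conjE !sq_oppE oppr0. Qed.
Lemma scaleI (r a1 a2 a3 a4 a5 a6 a7 : R) :
  so_scale r (mkI a1 a2 a3 a4 a5 a6 a7) = mkI (r*a1) (r*a2) (r*a3) (r*a4) (r*a5) (r*a6) (r*a7).
Proof. by rewrite /mkI so_scaleE !sq_scaleE mulr0. Qed.

Ltac toI v hv := move: v hv => [[? ? ? ?] [? ? ? ?]] /imE /= ->.
Ltac crunch := rewrite ?JzE ?so_qE ?OmegaE ?scaleI !crossI !innerI; ring.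

Lemma JIm (z w : splitoct R) : so_Im z -> so_Im w -> so_Im (Jz z w).
Proof. move=> hz hw; toI z hz; toI w hw; rewrite JzE crossI; exact: mkI_Im. Qed.
Lemma scaleIm (r : R) (w : splitoct R) : so_Im w -> so_Im (so_scale r w).
Proof. move=> hw; toI w hw; rewrite scaleI; exact: mkI_Im. Qed.
Lemma Jtan (z w : splitoct R) : so_Im z -> so_Im w -> so_inner z (Jz z w) = 0.
Proof. move=> hz hw; toI z hz; toI w hw; crunch. Qed.
Lemma anti12 (a b c : splitoct R) : so_Im a -> so_Im b -> so_Im c ->
  Omega a b c = - Omega b a c.
Proof. move=> ha hb hc; toI a ha; toI b hb; toI c hc; crunch. Qed.
Lemma anti23 (a b c : splitoct R) : so_Im a -> so_Im b -> so_Im c ->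
  Omega a b c = - Omega a c b.
Proof. move=> ha hb hc; toI a ha; toI b hb; toI c hc; crunch. Qed.
Lemma OmZ1 (r : R) (a b c : splitoct R) : so_Im a -> so_Im b -> so_Im c ->
  Omega (so_scale r a) b c = r * Omega a b c.
Proof. move=> ha hb hc; toI a ha; toI b hb; toI c hc; crunch. Qed.
Lemma OmZ2 (r : R) (a b c : splitoct R) : so_Im a -> so_Im b -> so_Im c ->
  Omega a (so_scale r b) c = r * Omega a b c.
Proof. move=> ha hb hc; toI a ha; toI b hb; toI c hc; crunch. Qed.
Lemma OmZ3 (r : R) (a b c : splitoct R) : so_Im a -> so_Im b -> so_Im c ->
  Omega a b (so_scale r c) = r * Omega a b c.
Proof. move=> ha hb hc; toI a ha; toI b hb; toI c hc; crunch. Qed.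
Lemma P1 (z X Y Z : splitoct R) : so_Im z -> so_Im X -> so_Im Y -> so_Im Z ->
  Omega (Jz z X) (Jz z Y) Z = so_q z * Omega X Y Z - so_inner z X * Omega z Y Z
    - so_inner z Y * Omega X z Z - 2 * so_inner z Z * Omega X Y z.
Proof.
move=> hz hX hY hZ; toI z hz; toI X hX; toI Y hY; toI Z hZ.
crunch.
Qed.
Definition ebase (i : nat) : splitoct R :=
  match i with
  | 0 => mkI 1 0 0 0 0 0 0 | 1 => mkI 0 1 0 0 0 0 0 | 2 => mkI 0 0 1 0 0 0 0
  | 3 => mkI 0 0 0 1 0 0 0 | 4 => mkI 0 0 0 0 1 0 0 | 5 => mkI 0 0 0 0 0 1 0
  | _ => mkI 0 0 0 0 0 0 1 end.
Definition W (z : splitoct R) (i : nat) := Jz z (ebase i).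
Lemma ebaseIm i : so_Im (ebase i).
Proof. by case: i => [|[|[|[|[|[|i]]]]]]; apply: mkI_Im. Qed.
Lemma W0I (a1 a2 a3 a4 a5 a6 a7 : R) : W (mkI a1 a2 a3 a4 a5 a6 a7) 0 = mkI (0) (a3) (-a2) (a5) (-a4) (-a7) (a6).
Proof. rewrite /W /ebase JzE crossI /mkI; congr (SQ _ _ _ _, SQ _ _ _ _); ring. Qed.
Lemma W1I (a1 a2 a3 a4 a5 a6 a7 : R) : W (mkI a1 a2 a3 a4 a5 a6 a7) 1 = mkI (a3) (0) (a1) (-a6) (-a7) (-a4) (-a5).
Proof. rewrite /W /ebase JzE crossI /mkI; congr (SQ _ _ _ _, SQ _ _ _ _); ring. Qed.
Lemma W2I (a1 a2 a3 a4 a5 a6 a7 : R) : W (mkI a1 a2 a3 a4 a5 a6 a7) 2 = mkI (-a2) (-a1) (0) (-a7) (a6) (a5) (-a4).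
Proof. rewrite /W /ebase JzE crossI /mkI; congr (SQ _ _ _ _, SQ _ _ _ _); ring. Qed.
Lemma W3I (a1 a2 a3 a4 a5 a6 a7 : R) : W (mkI a1 a2 a3 a4 a5 a6 a7) 3 = mkI (-a5) (-a6) (-a7) (0) (a1) (a2) (a3).
Proof. rewrite /W /ebase JzE crossI /mkI; congr (SQ _ _ _ _, SQ _ _ _ _); ring. Qed.
Lemma W4I (a1 a2 a3 a4 a5 a6 a7 : R) : W (mkI a1 a2 a3 a4 a5 a6 a7) 4 = mkI (a4) (-a7) (a6) (-a1) (0) (-a3) (a2).
Proof. rewrite /W /ebase JzE crossI /mkI; congr (SQ _ _ _ _, SQ _ _ _ _); ring. Qed.
Lemma W5I (a1 a2 a3 a4 a5 a6 a7 : R) : W (mkI a1 a2 a3 a4 a5 a6 a7) 5 = mkI (-a7) (a4) (-a5) (a2) (-a3) (0) (-a1).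
Proof. rewrite /W /ebase JzE crossI /mkI; congr (SQ _ _ _ _, SQ _ _ _ _); ring. Qed.
Lemma W6I (a1 a2 a3 a4 a5 a6 a7 : R) : W (mkI a1 a2 a3 a4 a5 a6 a7) 6 = mkI (a6) (a5) (a4) (a3) (a2) (a1) (0).
Proof. rewrite /W /ebase JzE crossI /mkI; congr (SQ _ _ _ _, SQ _ _ _ _); ring. Qed.
Lemma Tid (z : splitoct R) : so_Im z ->
  (Omega (W z 0) (W z 1) (W z 3))^+2 + (Omega (W z 0) (W z 1) (W z 4))^+2 - (Omega (W z 0) (W z 1) (W z 5))^+2 - (Omega (W z 0) (W z 1) (W z 6))^+2 + (Omega (W z 0) (W z 2) (W z 3))^+2 + (Omega (W z 0) (W z 2) (W z 4))^+2 - (Omega (W z 0) (W z 2) (W z 5))^+2 - (Omega (W z 0) (W z 2) (W z 6))^+2 + (Omega (W z 0) (W z 3) (W z 5))^+2 + (Omega (W z 0) (W z 3) (W z 6))^+2 + (Omega (W z 0) (W z 4) (W z 5))^+2 + (Omega (W z 0) (W z 4) (W z 6))^+2 - (Omega (W z 1) (W z 2) (W z 3))^+2 - (Omega (W z 1) (W z 2) (W z 4))^+2 + (Omega (W z 1) (W z 2) (W z 5))^+2 + (Omega (W z 1) (W z 2) (W z 6))^+2 + (Omega (W z 1) (W z 3) (W z 4))^+2 - (Omega (W z 1) (W z 3) (W z 6))^+2 - (Omega (W z 1) (W z 4) (W z 5))^+2 + (Omega (W z 1) (W z 5) (W z 6))^+2 + (Omega (W z 2) (W z 3) (W z 4))^+2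 - (Omega (W z 2) (W z 3) (W z 5))^+2 - (Omega (W z 2) (W z 4) (W z 6))^+2 + (Omega (W z 2) (W z 5) (W z 6))^+2 + (Omega (W z 3) (W z 4) (W z 5))^+2 + (Omega (W z 3) (W z 4) (W z 6))^+2 - (Omega (W z 3) (W z 5) (W z 6))^+2 - (Omega (W z 4) (W z 5) (W z 6))^+2 = 4 * so_q z ^+ 3.
Proof.
move=> hz; toI z hz.
rewrite !W0I !W1I !W2I !W3I !W4I !W5I !W6I so_qE !OmegaE !crossI !innerI.
ring.
Qed.
Lemma cextE (f : splitoct R -> splitoct R -> splitoct R -> R) (a1 b1 a2 b2 a3 b3 : splitoct R) :
  cext f (a1, b1) (a2, b2) (a3, b3) =
  Complex (f a1 a2 a3 - f b1 b2 a3 - f b1 a2 b3 - f a1 b2 b3)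
          (f b1 a2 a3 + f a1 b2 a3 + f a1 a2 b3 - f b1 b2 b3).
Proof. by []. Qed.
Lemma addcE (a b c d : R) : Complex a b + Complex c d = Complex (a + c) (b + d).
Proof. by []. Qed.
Lemma pi10E (z X : splitoct R) : pi10 z X = (so_scale (2^-1) X, so_scale (- 2^-1) (Jz z X)).
Proof. by []. Qed.
Lemma pi01E (z X : splitoct R) : pi01 z X = (so_scale (2^-1) X, so_scale (2^-1) (Jz z X)).
Proof. by []. Qed.
Lemma thetaHE (z X Y Z : splitoct R) : thetaH z X Y Z = cext (@Omega R) (pi10 z X) (pi10 z Y) (pi10 z Z).
Proof. by []. Qed.
Lemma zetaHE (z X Y Z : splitoct R) : zetaH z X Y Z =
  cext (@Omega R) (pi10 z X) (pi10 z Y) (pi01 z Z)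
  + cext (@Omega R) (pi10 z X) (pi01 z Y) (pi10 z Z)
  + cext (@Omega R) (pi01 z X) (pi10 z Y) (pi10 z Z).
Proof. by []. Qed.

Section Atoms.
Variables (z X Y Z : splitoct R).
Hypotheses (hz : so_Im z) (hX : so_Im X) (hY : so_Im Y) (hZ : so_Im Z)
  (hq : so_q z = -1) (tX : so_inner z X = 0) (tY : so_inner z Y = 0) (tZ : so_inner z Z = 0).

Lemma atoms :
  [/\ Omega (Jz z X) (Jz z Y) Z = - Omega X Y Z,
      Omega (Jz z X) Y (Jz z Z) = - Omega X Y Z,
      Omega X (Jz z Y) (Jz z Z) = - Omega X Y Z,
      Omega X (Jz z Y) Z = Omega (Jz z X) Y Z &
      Omega X Y (Jz z Z) = Omega (Jz z X) Y Z /\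
      Omega (Jz z X) (Jz z Y) (Jz z Z) = - Omega (Jz z X) Y Z].
Proof.
have JX := JIm hz hX; have JY := JIm hz hY; have JZ := JIm hz hZ.
have sX := Jtan hz hX; have sY := Jtan hz hY; have sZ := Jtan hz hZ.
have p1 := P1 hz hX hY hZ.
have p2 := P1 hz hX hZ hY.
have p3 := P1 hz hY hZ hX.
have p4 := P1 hz hX hY JZ.
have p5 := P1 hz hY hZ JX.
have p6 := P1 hz hZ hX JY.
rewrite hq tX tY tZ sX sY sZ in p1 p2 p3 p4 p5 p6.
have a1 := anti23 JX hY JZ.
have a2 := anti23 hX hY hZ.
have a3 := anti12 hX JY JZ.
have a4 := anti23 JY hX JZ.
have a5 := anti12 hX hY hZ.
have a6 := anti23 hY hX hZ.
have a7 := anti12 JX JY JZ.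
have a8 := anti23 JY JX JZ.
have a9 := anti12 JX hY hZ.
have a10 := anti23 hY JX hZ.
have a11 := anti23 JX JY JZ.
have a12 := anti12 JX JZ JY.
have a13 := anti23 JZ JX JY.
have a14 := anti12 hZ hX JY.
have a15 := anti23 hX hZ JY.
have a16 := anti23 hX JY hZ.
split; try split; lra.
Qed.

Lemma zeta0 : zetaH z X Y Z = 0.
Proof.
have JX := JIm hz hX; have JY := JIm hz hY; have JZ := JIm hz hZ.
case: atoms => e1 e2 e3 e4 [e5 e6].
rewrite zetaHE !pi10E !pi01E !cextE !addcE.
revert e1 e2 e3 e4 e5 e6 JX JY JZ; generalize (Jz z X) (Jz z Y) (Jz z Z) => jx jy jz e1 e2 e3 e4 e5 e6 JX JY JZ.
rewrite !OmZ1 //; try by apply: scaleIm.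
rewrite !OmZ2 //; try by apply: scaleIm.
rewrite !OmZ3 //; try by apply: scaleIm.
rewrite e1 e2 e3 e4 e5 e6.
have -> : (0 : R[i]) = Complex 0 0 by [].
by congr Complex; field.
Qed.

Lemma thetaRe : complex.Re (thetaH z X Y Z) = Omega X Y Z / 2.
Proof.
have JX := JIm hz hX; have JY := JIm hz hY; have JZ := JIm hz hZ.
case: atoms => e1 e2 e3 e4 [e5 e6].
rewrite thetaHE !pi10E !cextE /=.
revert e1 e2 e3 e4 e5 e6 JX JY JZ; generalize (Jz z X) (Jz z Y) (Jz z Z) => jx jy jz e1 e2 e3 e4 e5 e6 JX JY JZ.
rewrite !OmZ1 //; try by apply: scaleIm.
rewrite !OmZ2 //; try by apply: scaleIm.
rewrite !OmZ3 //; try by apply: scaleIm.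
rewrite e1 e2 e3.
by field.
Qed.
End Atoms.
End S.

From Stdlib Require Import Classical.

Theorem lemma3p4 (R : realType) :
  (* theta is nowhere vanishing on H^{4,2} *)
  (forall z : splitoct R, H42 z ->
     exists X Y Z : splitoct R,
       [/\ tangentH z X, tangentH z Y, tangentH z Z & thetaH z X Y Z != 0])
  /\
  (* zeta vanishes identically *)
  (forall z : splitoct R, H42 z ->
     forall X Y Z : splitoct R,
       tangentH z X -> tangentH z Y -> tangentH z Z -> zetaH z X Y Z = 0).
Proof.
split; last first.
  move=> z [hz hq] X Y Z [hX tX] [hY tY] [hZ tZ]; exact: zeta0.
move=> z [hz hq].
case: (classic (exists X Y Z : splitoct R,
       [/\ tangentH z X, tangentH z Y, tangentH z Z & thetaH z X Y Z != 0])) => // Hn.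
exfalso.
have key : forall X Y Z, tangentH z X -> tangentH z Y -> tangentH z Z -> Omega X Y Z = 0.
  move=> X Y Z [hX tX] [hY tY] [hZ tZ].
  have h0 : thetaH z X Y Z = 0.
    apply/eqP; apply/negPn/negP => hne; apply: Hn; exists X, Y, Z; split => //.
  have e := thetaRe hz hX hY hZ hq tX tY tZ.
  rewrite h0 /= in e.
  lra.
have tW : forall i, tangentH z (W z i).
  move=> i; rewrite /W; split; [exact: (JIm hz (@ebaseIm R i)) | exact: (Jtan hz (@ebaseIm R i))].
have e := Tid hz.
rewrite (key _ _ _ (tW 0) (tW 1) (tW 3)) (key _ _ _ (tW 0) (tW 1) (tW 4)) (key _ _ _ (tW 0) (tW 1) (tW 5)) (key _ _ _ (tW 0) (tW 1) (tW 6)) (key _ _ _ (tW 0) (tW 2) (tW 3)) (key _ _ _ (tW 0) (tW 2) (tW 4)) (key _ _ _ (tW 0) (tW 2) (tW 5)) (key _ _ _ (tW 0) (tW 2) (tW 6)) (key _ _ _ (tW 0) (tW 3) (tW 5)) (key _ _ _ (tW 0) (tW 3) (tW 6)) (key _ _ _ (tW 0) (tW 4) (tW 5)) (key _ _ _ (tW 0) (tW 4) (tW 6)) (key _ _ _ (tW 1) (tW 2) (tW 3)) (key _ _ _ (tW 1) (tW 2) (tW 4)) (key _ _ _ (tW 1) (tW 2) (tW 5)) (key _ _ _ (tW 1) (tW 2) (tW 6)) (key _ _ _ (tW 1) (tW 3) (tW 4)) (key _ _ _ (tW 1) (tW 3) (tW 6)) (key _ _ _ (tW 1) (tW 4) (tW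 5)) (key _ _ _ (tW 1) (tW 5) (tW 6)) (key _ _ _ (tW 2) (tW 3) (tW 4)) (key _ _ _ (tW 2) (tW 3) (tW 5)) (key _ _ _ (tW 2) (tW 4) (tW 6)) (key _ _ _ (tW 2) (tW 5) (tW 6)) (key _ _ _ (tW 3) (tW 4) (tW 5)) (key _ _ _ (tW 3) (tW 4) (tW 6)) (key _ _ _ (tW 3) (tW 5) (tW 6)) (key _ _ _ (tW 4) (tW 5) (tW 6)) hq in e.
have : (0 : R) = -4 by rewrite -[RHS](_ : 4 * (-1) ^+ 3 = -4); [rewrite -e; ring | ring].
lra.
Qed.
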